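(* Let $K$ be a field of characteristic zero, $\mathfrak{g}$ a finite-dimensional Lie algebra over $K$, $\mathfrak{g}_1$ an ideal of codimension one in $\mathfrak{g}$, and $f,f'\in\mathfrak{g}^*$ with restrictions $f_1=f|_{\mathfrak{g}_1}$, $f'_1=f'|_{\mathfrak{g}_1}$. Let $\mathfrak{p}_1$ be a subalgebra of $\mathfrak{g}_1$ that is a polarization of both $f_1$ and $f'_1$ in $\mathfrak{g}_1$, and suppose $f|_{\mathfrak{p}_1}=f'|_{\mathfrak{p}_1}$. Let $\mathfrak{p}$ be a polarization of $f$ and $\mathfrak{p}'$ a polarization of $f'$ in $\mathfrak{g}$ such that $\mathfrak{p}\cap\mathfrak{g}_1=\mathfrak{p}'\cap\mathfrak{g}_1=\mathfrak{p}_1$. Then $\mathfrak{p}=\mathfrak{p}'$.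
   Context: For a Lie algebra $\mathfrak{a}$ and $\varphi\in\mathfrak{a}^*$, a polarization of $\varphi$ in $\mathfrak{a}$ is a Lie subalgebra $\mathfrak{p}\subseteq\mathfrak{a}$ with $\varphi([\mathfrak{p},\mathfrak{p}])=0$ and $\dim\mathfrak{p}=\frac12(\dim\mathfrak{a}+\dim\mathfrak{a}^{\varphi})$, where $\mathfrak{a}^\varphi=\{x\in\mathfrak{a}\mid \varphi([x,\mathfrak{a}])=0\}$. *)

(* Defs.v *)
From HB Require Import structures.
From mathcomp Require Import all_boot all_order all_algebra.
Set Implicit Arguments. Unset Strict Implicit. Unset Printing Implicit Defensive.
Import GRing.Theory.
Local Open Scope ring_scope.

Definition is_lie_bracket (K : fieldType) (V : vectType K) (br : V -> V -> V) : Prop :=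
  [/\ (forall x, linear (br x)),
      (forall y, linear (fun x => br x y)),
      (forall x, br x x = 0) &
      (forall x y z, br x (br y z) + br y (br z x) + br z (br x y) = 0)].

Definition lie_subalgebra (K : fieldType) (V : vectType K) (br : V -> V -> V)
    (U : {vspace V}) : Prop :=
  forall x y, x \in U -> y \in U -> br x y \in U.

Definition lie_ideal (K : fieldType) (V : vectType K) (br : V -> V -> V)
    (I : {vspace V}) : Prop :=
  forall x y, y \in I -> br x y \in I.

Definition is_stabilizer (K : fieldType) (V : vectType K) (br : V -> V -> V)
    (a : {vspace V}) (phi : V -> K) (S : {vspace V}) : Prop :=
  forall x, x \in S <-> (x \in a /\ forall y, y \in a -> phi (br x y) = 0).

Definition polarization (K : fieldType) (V : vectType K) (br : V -> V -> V)
    (a : {vspace V}) (phi : V -> K) (p : {vspace V}) : Prop :=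
  [/\ (p <= a)%VS,
      lie_subalgebra br p,
      (forall x y, x \in p -> y \in p -> phi (br x y) = 0) &
      exists2 S : {vspace V}, is_stabilizer br a phi S &
        (2 * \dim p = \dim a + \dim S)%N].

(* Main.v *)
Require Import Defs.
From HB Require Import structures.
From mathcomp Require Import all_boot all_order all_algebra zify.
Import GRing.Theory.
Local Open Scope ring_scope.
Import VectorInternalTheory.

Lemma core (K : fieldType) n mA mU mT mS (G : 'M[K]_n)
  (A : 'M_(mA, n)) (U : 'M_(mU, n)) (T : 'M_(mT, n)) (S : 'M_(mS, n))
  (antis : G^T = - G) (UA : (U <= A)%MS) (TA : (T <= A)%MS)
  (TU : T *m G *m U^T = 0)
  (HS : forall k (x : 'M_(k, n)), (x <= A)%MS -> x *m G *m A^T = 0 -> (x <= S)%MS) :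
  (\rank T + \rank U <= \rank A + \rank S)%N.
Proof.
move: (row_base A) (eq_row_base A) => A' eA.
move: (row_base U) (eq_row_base U) (row_base_free U) => U' eU fU.
set M := A' *m G *m U'^T.
have hT : (\rank T <= \rank A - \rank M)%N.
  have TA' : (T <= A')%MS by rewrite eA.
  set X := T *m pinvmx A'.
  have TX : T = X *m A' by rewrite mulmxKpV.
  have U'U : (U' <= U)%MS by rewrite eU.
  case/submxP: U'U => D hD.
  have XM : (X <= kermx M)%MS.
    apply/sub_kermxP.
    have -> : X *m M = X *m A' *m G *m U'^T by rewrite /M !mulmxA.
    by rewrite -TX hD trmx_mul mulmxA TU mul0mx.
  rewrite TX (leq_trans (mxrankM_maxl _ _)) //.
  by rewrite (leq_trans (mxrankS XM)) // mxrank_ker.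
have hU : (\rank U - \rank M <= \rank S)%N.
  set Y := kermx M^T.
  have YM : Y *m M^T = 0 by apply/sub_kermxP.
  have rY : \rank (Y *m U') = \rank Y by rewrite mxrankMfree.
  have : (Y *m U' <= S)%MS.
    apply: HS.
      by rewrite (submx_trans (submxMl _ _)) // eU.
    have A'A : (A <= A')%MS by rewrite eA.
    case/submxP: A'A => D hD.
    rewrite hD trmx_mul !mulmxA.
    move: YM; rewrite /M !trmx_mul trmxK antis.
    rewrite !mulmxA mulmxN mulNmx => /eqP; rewrite oppr_eq0 => /eqP ->.
    by rewrite mul0mx.
  move/mxrankS; rewrite rY /Y mxrank_ker mxrank_tr.
  done.
have : (\rank M <= \rank A)%N.
  by rewrite (leq_trans (rank_leq_row _)) //.
move: hT hU; rewrite -/M.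
have : (\rank M <= \rank U)%N.
  by rewrite -mxrank_tr (leq_trans (rank_leq_row _)) //.
lia.
Qed.

Section B.
Variables (K : fieldType) (V : vectType K) (B : V -> V -> K).
Hypothesis HBl : forall a x z y, B (a *: x + z) y = a * B x y + B z y.
Hypothesis HBr : forall a x y z, B x (a *: y + z) = a * B x y + B x z.

Lemma B0l y : B 0 y = 0.
Proof. have := HBl 1 0 0 y; rewrite scale1r addr0 mul1r => h.
by apply: (addrI (B 0 y)); rewrite addr0; apply: esym. Qed.
Lemma B0r x : B x 0 = 0.
Proof. have := HBr 1 x 0 0; rewrite scale1r addr0 mul1r => h.
by apply: (addrI (B x 0)); rewrite addr0; apply: esym. Qed.

Lemma Bsuml n (a : 'I_n -> K) (v : 'I_n -> V) y :
  B (\sum_(i < n) a i *: v i) y = \sum_(i < n) a i * B (v i) y.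
Proof.
apply: (big_rec2 (fun s t => B s y = t)); first exact: B0l.
by move=> i s t _ <-; rewrite HBl.
Qed.
Lemma Bsumr n (a : 'I_n -> K) (v : 'I_n -> V) x :
  B x (\sum_(i < n) a i *: v i) = \sum_(i < n) a i * B x (v i).
Proof.
apply: (big_rec2 (fun s t => B x s = t)); first exact: B0r.
by move=> i s t _ <-; rewrite HBr.
Qed.

Definition e (i : 'I_(dim V)) : V := r2v (delta_mx 0 i).
Definition Gm : 'M[K]_(dim V) := \matrix_(i, j) B (e i) (e j).

Lemma vexp x : x = \sum_(i < dim V) (v2r x) 0 i *: e i.
Proof.
rewrite -{1}(v2rK x) {1}(row_sum_delta (v2r x)) linear_sum.
by apply: eq_bigr => i _; rewrite linearZ.
Qed.

Lemma Bc x y : B x y = (v2r x *m Gm *m (v2r y)^T) 0 0.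
Proof.
rewrite {1}(vexp x) {1}(vexp y) Bsuml.
rewrite mxE; under eq_bigr => i _ do rewrite Bsumr mulr_sumr.
rewrite exchange_big /=; apply: eq_bigr => j _.
rewrite !mxE mulr_suml; apply: eq_bigr => i _.
by rewrite mxE -mulrA [_ * v2r y 0 j]mulrC.
Qed.

Hypothesis Hanti : forall x y, B y x = - B x y.

Lemma memvK' (v : V) (U : {vspace V}) : (v \in U) = (v2r v <= vs2mx U)%MS.
Proof. by rewrite -genmxE. Qed.

Lemma entry n m1 m2 (X : 'M[K]_(m1, n)) (G : 'M_n) (Y : 'M_(m2, n)) i j :
  (X *m G *m Y^T) i j = (row i X *m G *m (row j Y)^T) 0 0.
Proof. rewrite !mxE; apply: eq_bigr => k _; rewrite !mxE; congr (_ * _); apply: eq_bigr => l _; rewrite !mxE. by []. Qed.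

Lemma vcore (A U T S : {vspace V}) (UA : (U <= A)%VS) (TA : (T <= A)%VS)
  (TU : forall t u, t \in T -> u \in U -> B t u = 0)
  (HS : forall x, x \in A -> (forall y, y \in A -> B x y = 0) -> x \in S) :
  (\dim T + \dim U <= \dim A + \dim S)%N.
Proof.
apply: (@core K (dim V) _ _ _ _ (Gm)).
- by apply/matrixP => i j; rewrite !mxE Hanti.
- exact: UA.
- exact: TA.
- apply/matrixP => i j; rewrite entry [RHS]mxE.
  have r2 (W : {vspace V}) k : r2v (row k (vs2mx W)) \in W.
    by rewrite memvK' r2vK row_sub.
  by rewrite -[row i _]r2vK -[row j _]r2vK -Bc TU ?r2.
- move=> k x xA xG; apply/row_subP => i.
  rewrite -[row i x]r2vK -memvK'; apply: HS.
    by rewrite memvK' r2vK (submx_trans (row_sub _ _)).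
  move=> y; rewrite memvK' => /submxP [w hw].
  rewrite Bc r2vK hw trmx_mul !mulmxA -row_mul -row_mul xG.
  by rewrite row0 !mul0mx mxE.
Qed.
End B.

Lemma incl (K : fieldType) (V : vectType K) (br : V -> V -> V) (Hlie : is_lie_bracket br)
    (g1 : {vspace V}) (Hg1 : lie_ideal br g1)
    (Hcodim : (\dim g1).+1 = \dim (fullv : {vspace V}))
    (f f' : {scalar V}) (p1 : {vspace V})
    (Hp1' : polarization br g1 f' p1)
    (Hff' : forall x, x \in p1 -> f x = f' x)
    (p p' : {vspace V})
    (Hp : polarization br fullv f p) (Hp' : polarization br fullv f' p')
    (Hpg1 : (p :&: g1)%VS = p1) (Hp'g1 : (p' :&: g1)%VS = p1) :
  (p <= p')%VS.
Proof.
case: Hlie => H1 H2 H3 H4.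
pose B x y : K := f' (br x y).
have HBl a x z y : B (a *: x + z) y = a * B x y + B z y.
  by rewrite /B H2 linearP.
have HBr a x y z : B x (a *: y + z) = a * B x y + B x z.
  by rewrite /B H1 linearP.
have brDl x y z : br (x + y) z = br x z + br y z.
  by have := H2 z 1 x y; rewrite !scale1r.
have brDr x y z : br x (y + z) = br x y + br x z.
  by have := H1 x 1 y z; rewrite !scale1r.
have Hanti x y : B y x = - B x y.
  have h := H3 (x + y); rewrite brDl !brDr !H3 add0r addr0 in h.
  move/eqP: h; rewrite addr_eq0 /B => /eqP ->; by rewrite raddfN opprK.
case: Hp => psub psa piso _.
case: Hp' => p'sub p'sa p'iso [S' hS' hdim'].
case: Hp1' => p1sub _ _ [S1 hS1 hdim1].
have p1p : (p1 <= p)%VS by rewrite -Hpg1 capvSl.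
have p1p' : (p1 <= p')%VS by rewrite -Hp'g1 capvSl.
have ortho : forall t u, t \in (p + p')%VS -> u \in p1 -> B t u = 0.
  move=> t u /memv_addP [x xp [x' x'p ->]] up1.
  rewrite /B brDl raddfD /=.
  rewrite (p'iso x' u x'p (subvP p1p' _ up1)) addr0.
  have : br x u \in p1.
    have up : u \in p by exact: (subvP p1p _ up1).
    have ug : u \in g1 by exact: (subvP p1sub _ up1).
    by rewrite -Hpg1 memv_cap psa // Hg1.
  move=> /Hff' <-; exact: piso (subvP p1p _ up1).
set T := (p + p')%VS.
have d1 : (\dim T + \dim p1 <= \dim (fullv : {vspace V}) + \dim S')%N.
  have := (@vcore K V B HBl HBr Hanti fullv p1 T S'); move=> h; apply: h => //.
  - exact: subvf.
  - exact: subvf.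
  move=> x xa h; apply: (proj2 (hS' x)); split=> //.
have d2 : (\dim (T :&: g1) + \dim p1 <= \dim g1 + \dim S1)%N.
  have := (@vcore K V B HBl HBr Hanti g1 p1 (T :&: g1) S1); move=> h; apply: h => //.
  - exact: capvSr.
  - move=> t u /memv_capP [tT _]; exact: ortho.
  move=> x xa h; apply: (proj2 (hS1 x)); split=> //.
have d3 := dimv_sum_cap T g1.
have d4 : (\dim (T + g1) <= \dim (fullv : {vspace V}))%N by apply: dimvS; exact: subvf.
have d5 := dimvS p1p'.
have pT : (p' <= T)%VS by exact: addvSr.
have dT : (\dim T <= \dim p')%N by lia.
have /eqP -> : p' == T by rewrite -(dimv_leqif_eq pT) eqn_leq dT dimvS.
exact: addvSl.
Qed.

Theorem lemma3p6 (K : fieldType) (char0 : [pchar K] =i pred0)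
    (V : vectType K) (br : V -> V -> V) (Hlie : is_lie_bracket br)
    (g1 : {vspace V}) (Hg1 : lie_ideal br g1)
    (Hcodim : (\dim g1).+1 = \dim (fullv : {vspace V}))
    (f f' : {scalar V})
    (p1 : {vspace V})
    (Hp1 : polarization br g1 f p1) (Hp1' : polarization br g1 f' p1)
    (Hff' : forall x, x \in p1 -> f x = f' x)
    (p p' : {vspace V})
    (Hp : polarization br fullv f p) (Hp' : polarization br fullv f' p')
    (Hpg1 : (p :&: g1)%VS = p1) (Hp'g1 : (p' :&: g1)%VS = p1) :
  p = p'.
Proof.
apply/eqP; rewrite eqEsubv; apply/andP; split.
- by have h := (@incl K V br Hlie g1 Hg1 Hcodim f f' p1 Hp1' Hff' p p' Hp Hp' Hpg1 Hp'g1); apply: h.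
- have Hff : forall x, x \in p1 -> f' x = f x by move=> x /Hff' ->.
  by have h := (@incl K V br Hlie g1 Hg1 Hcodim f' f p1 Hp1 Hff p' p Hp' Hp Hp'g1 Hpg1); apply: h.
Qed.
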